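(* Let $\mathcal R$ be a DCTRS and $\langle t,\pi'\rangle$ a safe pair such that $\langle t,\pi'\rangle\leftharpoondown_{\mathcal R}^{*}\langle s,\pi\rangle$ for some term $s$ and trace $\pi$. Then the derivation $\langle t,\pi'\rangle\leftharpoondown_{\mathcal R}^{*}\langle s,\pi\rangle$ is deterministic.
   Context: Terms $\mathcal T(\mathcal F,\mathcal V)$; $\mathrm{Pos}(t)$ positions ($\epsilon$ root), $t|_p$ subterm, $t[u]_p$ replacement, $\mathrm{Var}(t_1,\dots,t_n)$ the variables occurring in the $t_i$, $\mathrm{Dom}(\sigma)=\{x\mid x\sigma\ne x\}$. A DCTRS $\mathcal R$ is a finite set of labelled conditional rules $\beta: l\to r\Leftarrow s_1\twoheadrightarrow t_1,\dots,s_n\twoheadrightarrow t_n$ ($l\notin\mathcal V$) with $\mathrm{Var}(r)\subseteq\mathrm{Var}(l,s_1,\dots,s_n,t_1,\dots,t_n)$ and $\mathrm{Var}(s_i)\subseteq\mathrm{Var}(l,t_1,\dots,t_{i-1})$ for all $i$; labels are unique and rule variables are never renamed. For such a rule let $V_\beta=(\mathrm{Var}(l)\setminus\mathrm{Var}(r,s_1,\dots,s_n,t_1,\dots,t_n))\cup\bigcup_{i=1}^n(\mathrm{Var}(t_i)\setminus\mathrm{Var}(r,s_{i+1},\dots,s_n))$. Traces: $[\,]$ is a trace, and if $\pi,\pi_1,\dots,\pi_n$ are traces, $\beta$ labels a rule with $n$ conditions, $p$ is a position and $\sigma$ a ground substitution, then $\beta(p,\sigma,\pi_1,\dots,\pi_n):\pi$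 is a trace. A trace $\pi$ is safe iff for every trace term $\beta(p,\sigma,\pi_1,\dots,\pi_n)$ in $\pi$, $\sigma$ is ground with $\mathrm{Dom}(\sigma)=V_\beta$ and $\pi_1,\dots,\pi_n$ are safe; $\langle s,\pi\rangle$ ($s$ ground) is safe iff $\pi$ is. Backward reversible rewriting (least relation on safe pairs): $\langle t,\beta(p,\sigma',\pi_1,\dots,\pi_n):\pi\rangle\leftharpoondown_{\mathcal R}\langle s,\pi\rangle$ iff this pair is safe, $\beta: l\to r\Leftarrow s_1\twoheadrightarrow t_1,\dots,s_n\twoheadrightarrow t_n\in\mathcal R$, and there is a ground $\theta$ with $\mathrm{Dom}(\theta)=\mathrm{Var}(r,s_1,\dots,s_n)\setminus\mathrm{Dom}(\sigma')$, $t|_p=r\theta$, $\langle t_i\theta\sigma',\pi_i\rangle\leftharpoondown_{\mathcal R}^{*}\langle s_i\theta\sigma',[\,]\rangle$ for all $i$, and $s=t[l\theta\sigma']_p$. A step $\langle t,\pi'\rangle\leftharpoondown_{\mathcal R}\langle s,\pi\rangle$ is deterministic if there is no pair $\langle s'',\pi''\rangle\neq\langle s,\pi\rangle$ with $\langle t,\pi'\rangle\leftharpoondown_{\mathcal R}\langle s'',\pi''\rangle$ and, moreover, the subderivations for the conditions of the applied rule are deterministic; a derivation is deterministic if each of its steps is. *)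

(* Defs.v *)
From Stdlib Require Import List.
Import ListNotations.
Set Implicit Arguments.

Inductive term : Type :=
| Var : nat -> term
| Fun : nat -> list term -> term.

Fixpoint vars (t : term) : list nat :=
  match t with
  | Var x => [x]
  | Fun _ args => flat_map vars args
  end.

Definition ground (t : term) : Prop := vars t = [].

Definition subst_t := nat -> term.

Fixpoint subst (sigma : subst_t) (t : term) : term :=
  match t with
  | Var x => sigma x
  | Fun f args => Fun f (map (subst sigma) args)
  end.

Definition in_dom (sigma : subst_t) (x : nat) : Prop := sigma x <> Var x.

Definition ground_subst (sigma : subst_t) : Prop :=
  forall x, in_dom sigma x -> ground (sigma x).

(** Positions: lists of (0-based) argument indices; [] is the root. *)
Definition pos := list nat.

Fixpoint subterm_at (t : term) (p : pos) : option term :=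
  match p with
  | [] => Some t
  | i :: p' =>
      match t with
      | Var _ => None
      | Fun _ args =>
          match nth_error args i with
          | Some u => subterm_at u p'
          | None => None
          end
      end
  end.

Fixpoint set_nth (l : list term) (i : nat) (u : term) : list term :=
  match l, i with
  | [], _ => []
  | _ :: l', 0 => u :: l'
  | a :: l', S i' => a :: set_nth l' i' u
  end.

Fixpoint replace_at (t : term) (p : pos) (u : term) : option term :=
  match p with
  | [] => Some u
  | i :: p' =>
      match t with
      | Var _ => None
      | Fun f args =>
          match nth_error args i with
          | Some ti =>
              match replace_at ti p' u with
              | Some ti' => Some (Fun f (set_nth args i ti'))
              | None => None
              end
          | None => None
          end
      end
  end.

(** Labelled conditional rules  beta : l -> r <= s_1 ->> t_1, ..., s_n ->> t_n
    (conditions stored as pairs (s_i, t_i), 0-based). *)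
Record rule : Type := mkRule {
  label : nat;
  lhs : term;
  rhs : term;
  conds : list (term * term)
}.

Definition cs (rl : rule) (i : nat) : term := fst (nth i (conds rl) (Var 0, Var 0)).
Definition ct (rl : rule) (i : nat) : term := snd (nth i (conds rl) (Var 0, Var 0)).
Definition ncond (rl : rule) : nat := length (conds rl).

Definition dctrs_rule (rl : rule) : Prop :=
  (forall x, lhs rl <> Var x) /\
  (forall x, In x (vars (rhs rl)) ->
     In x (vars (lhs rl)) \/
     exists i, i < ncond rl /\ (In x (vars (cs rl i)) \/ In x (vars (ct rl i)))) /\
  (forall i, i < ncond rl -> forall x, In x (vars (cs rl i)) ->
     In x (vars (lhs rl)) \/ exists j, j < i /\ In x (vars (ct rl j))).

Definition DCTRS (R : list rule) : Prop :=
  NoDup (map label R) /\ Forall dctrs_rule R.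

Definition in_Vbeta (rl : rule) (x : nat) : Prop :=
  (In x (vars (lhs rl)) /\
   ~ (In x (vars (rhs rl)) \/
      exists j, j < ncond rl /\ (In x (vars (cs rl j)) \/ In x (vars (ct rl j)))))
  \/
  (exists i, i < ncond rl /\ In x (vars (ct rl i)) /\
   ~ (In x (vars (rhs rl)) \/
      exists j, i < j /\ j < ncond rl /\ In x (vars (cs rl j)))).

Inductive trace_term : Type :=
| TT : nat -> pos -> subst_t -> list (list trace_term) -> trace_term.

Definition trace := list trace_term.

Inductive safe_tt (R : list rule) : trace_term -> Prop :=
| safe_TT : forall b p sigma pis rl,
    In rl R -> label rl = b -> length pis = ncond rl ->
    ground_subst sigma ->
    (forall x, in_dom sigma x <-> in_Vbeta rl x) ->
    (forall pi, In pi pis -> forall tt, In tt pi -> safe_tt R tt) ->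
    safe_tt R (TT b p sigma pis).

Definition safe_trace (R : list rule) (pi : trace) : Prop :=
  forall tt, In tt pi -> safe_tt R tt.

Definition safe_pair (R : list rule) (s : term) (pi : trace) : Prop :=
  ground s /\ safe_trace R pi.

(** Backward reversible rewriting, with derivations as (proof-relevant) objects.
    [bstep R t pi' s pi] :  <t, pi'>  <-  <s, pi>   (one backward step)
    [bstar R t pi' s pi] :  <t, pi'>  <-* <s, pi>                          *)
Inductive bstep (R : list rule) : term -> trace -> term -> trace -> Type :=
| BStep : forall (t s : term) (b : nat) (p : pos) (sigma' : subst_t)
                 (pis : list trace) (pi : trace) (rl : rule) (theta : subst_t),
    safe_pair R t (TT b p sigma' pis :: pi) ->
    In rl R -> label rl = b -> length pis = ncond rl ->
    ground_subst theta ->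
    (forall x, in_dom theta x <->
       ((In x (vars (rhs rl)) \/
         exists j, j < ncond rl /\ In x (vars (cs rl j))) /\ ~ in_dom sigma' x)) ->
    subterm_at t p = Some (subst theta (rhs rl)) ->
    (forall i, i < ncond rl ->
       bstar R (subst sigma' (subst theta (ct rl i))) (nth i pis [])
               (subst sigma' (subst theta (cs rl i))) []) ->
    replace_at t p (subst sigma' (subst theta (lhs rl))) = Some s ->
    bstep R t (TT b p sigma' pis :: pi) s pi
with bstar (R : list rule) : term -> trace -> term -> trace -> Type :=
| BRefl : forall t pi, bstar R t pi t pi
| BTrans : forall t1 pi1 t2 pi2 t3 pi3,
    bstep R t1 pi1 t2 pi2 -> bstar R t2 pi2 t3 pi3 -> bstar R t1 pi1 t3 pi3.

Fixpoint det_step {R : list rule} {t pi' s pi} (D : bstep R t pi' s pi) {struct D} : Prop :=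
  match D with
  | @BStep _ t0 s0 b p sigma' pis pi0 rl theta _ _ _ _ _ _ _ subs _ =>
      (forall s'' pi'', bstep R t0 (TT b p sigma' pis :: pi0) s'' pi'' ->
                        (s'', pi'') = (s0, pi0)) /\
      (forall i (H : i < ncond rl), det_star (subs i H))
  end
with det_star {R : list rule} {t pi' s pi} (D : bstar R t pi' s pi) {struct D} : Prop :=
  match D with
  | @BRefl _ _ _ => True
  | @BTrans _ _ _ _ _ _ _ st rest => det_step st /\ det_star rest
  end.

(* Main.v *)
Require Import Defs.
From Stdlib Require Import List Lia Classical.
Import ListNotations.

Section Aux.

Lemma term_ind' (P : term -> Prop) :
  (forall x, P (Var x)) ->
  (forall f l, Forall P l -> P (Fun f l)) -> forall t, P t.
Proof.
  intros HV HF. fix IH 1. intros [x|f l].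
  - apply HV.
  - apply HF. induction l as [|a l IHl]; constructor; [apply IH|exact IHl].
Qed.

Lemma subst_comp s th u :
  subst s (subst th u) = subst (fun x => subst s (th x)) u.
Proof.
  induction u using term_ind'; simpl; auto.
  f_equal. rewrite map_map. induction H; simpl; auto. rewrite H, IHForall; auto.
Qed.

Lemma subst_ext_in f g u :
  (forall x, In x (vars u) -> f x = g x) -> subst f u = subst g u.
Proof.
  induction u using term_ind'; simpl; intros Hx.
  - apply Hx; auto.
  - f_equal. induction H; simpl in *; auto.
    rewrite H, IHForall; auto; intros; apply Hx; apply in_or_app; auto.
Qed.

Lemma subst_eq_vars f g u :
  subst f u = subst g u -> forall x, In x (vars u) -> f x = g x.
Proof.
  induction u using term_ind'; simpl; intros He y Hy.
  - destruct Hy as [<-|[]]; auto.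
  - injection He as He. induction H; simpl in *; [contradiction|].
    injection He as He1 He2. apply in_app_or in Hy as [Hy|Hy]; eauto.
Qed.

Lemma nodup_label R a b : NoDup (map label R) -> In a R -> In b R -> label a = label b -> a = b.
Proof.
  induction R as [|c R IH]; simpl; intros HN Ha Hb Hl; [contradiction|].
  inversion HN; subst.
  destruct Ha as [<-|Ha]; destruct Hb as [<-|Hb]; auto.
  - exfalso; apply H1; rewrite Hl; apply in_map; auto.
  - exfalso; apply H1; rewrite <- Hl; apply in_map; auto.
Qed.

Lemma not_dom_var th x : ~ in_dom th x -> th x = Var x.
Proof. intros H. unfold in_dom in H. apply NNPP in H. auto. Qed.

Lemma bstep_inv R t tr s pi : bstep R t tr s pi ->
  exists b p sigma' pis rl theta,
    tr = TT b p sigma' pis :: pi /\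
    safe_pair R t (TT b p sigma' pis :: pi) /\
    In rl R /\ label rl = b /\
    (forall x, in_dom theta x <->
       ((In x (vars (rhs rl)) \/
         exists j, j < ncond rl /\ In x (vars (cs rl j))) /\ ~ in_dom sigma' x)) /\
    subterm_at t p = Some (subst theta (rhs rl)) /\
    (forall i, i < ncond rl ->
       inhabited (bstar R (subst sigma' (subst theta (ct rl i))) (nth i pis [])
               (subst sigma' (subst theta (cs rl i))) [])) /\
    replace_at t p (subst sigma' (subst theta (lhs rl))) = Some s.
Proof.
  intros D. destruct D.
  exists b, p, sigma', pis, rl, theta.
  split; [reflexivity|]. split; [exact s0|]. split; [exact i|]. split; [exact e|].
  split; [exact i0|]. split; [exact e1|]. split; [|exact e2].
  intros i1 Hi; constructor; auto.
Qed.

Lemma step_core R (HR: NoDup (map label R)) t s b p sigma' pis pi rl theta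
 (Hsafe: safe_pair R t (TT b p sigma' pis :: pi))
 (Hin: In rl R) (Hl: label rl = b)
 (Hdom : forall x, in_dom theta x <->
       ((In x (vars (rhs rl)) \/
         exists j, j < ncond rl /\ In x (vars (cs rl j))) /\ ~ in_dom sigma' x))
 (Hsub: subterm_at t p = Some (subst theta (rhs rl)))
 (IH: forall i, i < ncond rl -> forall s2,
     bstar R (subst sigma' (subst theta (ct rl i))) (nth i pis []) s2 [] ->
     s2 = subst sigma' (subst theta (cs rl i)))
 (Hrep: replace_at t p (subst sigma' (subst theta (lhs rl))) = Some s)
 s2 pi2 (D2: bstep R t (TT b p sigma' pis :: pi) s2 pi2) : s2 = s /\ pi2 = pi.
Proof.
  apply bstep_inv in D2.
  destruct D2 as (b2 & p2 & sg2 & pis2 & rl2 & th2 & Htr & _ & Hin2 & Hl2 & Hdom2 & Hsub2 & Hc2 & Hrep2).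
  injection Htr as <- <- <- <- <-.
  assert (rl2 = rl) by (apply (@nodup_label R _ _ HR); congruence). subst rl2.
  assert (HV : forall x, in_dom sigma' x <-> in_Vbeta rl x).
  { destruct Hsafe as [_ Hst]. assert (H := Hst _ (or_introl eq_refl)).
    inversion H; subst.
    assert (rl0 = rl) by (apply (@nodup_label R _ _ HR); congruence). subst rl0. auto. }
  set (c1 := fun x => subst sigma' (theta x)).
  set (c2 := fun x => subst sigma' (th2 x)).
  assert (HA : forall x, In x (vars (rhs rl)) -> c1 x = c2 x).
  { intros x Hx. unfold c1, c2. f_equal.
    rewrite Hsub in Hsub2. injection Hsub2 as Hs.
    eapply subst_eq_vars; eauto. }
  set (n := ncond rl).
  assert (HB : forall m j, j < n -> n - j <= m -> forall x, In x (vars (cs rl j)) -> c1 x = c2 x).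
  { induction m as [|m IHm]; intros j Hj Hm; [lia|].
    assert (Hct : forall x, In x (vars (ct rl j)) -> c1 x = c2 x).
    { intros x Hx.
      destruct (classic (In x (vars (rhs rl)))) as [Hr|Hr]; [auto|].
      destruct (classic (exists k, j < k /\ k < n /\ In x (vars (cs rl k)))) as [[k (Hk1&Hk2&Hk3)]|Hk].
      - apply (IHm k); auto; lia.
      - assert (Hd : in_dom sigma' x).
        { apply HV. right. exists j. split; [auto|split; auto].
          intros [?|?]; auto. }
        unfold c1, c2. rewrite (not_dom_var theta x), (not_dom_var th2 x); auto.
        + intros Hx2; apply Hdom2 in Hx2; tauto.
        + intros Hx2; apply Hdom in Hx2; tauto. }
    destruct (Hc2 j Hj) as [Dj].
    assert (Eq : subst sigma' (subst th2 (ct rl j)) = subst sigma' (subst theta (ct rl j))).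
    { rewrite !subst_comp. symmetry. apply subst_ext_in. exact Hct. }
    rewrite Eq in Dj.
    apply IH in Dj; auto. rewrite !subst_comp in Dj.
    intros x Hx. symmetry. eapply subst_eq_vars; eauto. }
  assert (HC : forall x, c1 x = c2 x).
  { intros x.
    destruct (classic (In x (vars (rhs rl)) \/
         exists j, j < ncond rl /\ In x (vars (cs rl j)))) as [[H|[j [Hj H]]]|H].
    - auto.
    - apply (HB (n - j) j); auto.
    - unfold c1, c2. rewrite (not_dom_var theta x), (not_dom_var th2 x); auto.
      + intros Hx2; apply Hdom2 in Hx2; tauto.
      + intros Hx2; apply Hdom in Hx2; tauto. }
  assert (Eq : subst sigma' (subst th2 (lhs rl)) = subst sigma' (subst theta (lhs rl))).
  { rewrite !subst_comp. symmetry. apply subst_ext_in. intros; apply HC. }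
  rewrite Eq in Hrep2.
  rewrite Hrep in Hrep2. injection Hrep2; auto.
Qed.

Lemma bstar_inv R a x b y : bstar R a x b y ->
  ((a = b /\ x = y) + {a' : term & {x' : trace & (bstep R a x a' x' * bstar R a' x' b y)%type}})%type.
Proof. intros D. destruct D; [left; auto | right; eauto]. Qed.

Lemma bstar_len R a x b y : bstar R a x b y -> length y <= length x.
Proof.
  intros D. induction D; auto.
  apply bstep_inv in b. destruct b as (? & ? & ? & ? & ? & ? & -> & _). simpl. lia.
Qed.

Lemma bstep_len R a x b y : bstep R a x b y -> length y < length x.
Proof.
  intros D. apply bstep_inv in D. destruct D as (? & ? & ? & ? & ? & ? & -> & _). simpl. lia.
Qed.

Fixpoint star_fun R (HR: NoDup (map label R)) t pi' s pi (D : bstar R t pi' s pi) {struct D} :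
  forall s2, bstar R t pi' s2 pi -> s2 = s
with step_fun R (HR: NoDup (map label R)) t pi' s pi (D : bstep R t pi' s pi) {struct D} :
  forall s2 pi2, bstep R t pi' s2 pi2 -> s2 = s /\ pi2 = pi.
Proof.
  - destruct D as [t pi | t1 pi1 t2 pi2 t3 pi3 st rest]; intros s2 D2.
    + apply bstar_inv in D2. destruct D2 as [[-> _]|[a' [x' [st2 r2]]]]; auto.
      exfalso. apply bstep_len in st2. apply bstar_len in r2. lia.
    + apply bstar_inv in D2. destruct D2 as [[-> ->]|[a' [x' [st2 r2]]]].
      * exfalso. apply bstep_len in st. apply bstar_len in rest. lia.
      * destruct (step_fun R HR _ _ _ _ st _ _ st2) as [-> ->].
        exact (star_fun R HR _ _ _ _ rest _ r2).
  - destruct D. intros s2 pi2 D2.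
    refine (step_core R HR t s b p sigma' pis pi rl theta s0 i e i0 e1 _ e2 s2 pi2 D2).
    intros i1 Hi s3 D3. exact (star_fun R HR _ _ _ _ (b0 i1 Hi) _ D3).
Qed.

Fixpoint det_star_all R (HR: NoDup (map label R)) t pi' s pi (D : bstar R t pi' s pi) {struct D} :
  det_star D
with det_step_all R (HR: NoDup (map label R)) t pi' s pi (D : bstep R t pi' s pi) {struct D} :
  det_step D.
Proof.
  - destruct D as [t pi | t1 pi1 t2 pi2 t3 pi3 st rest]; simpl; auto.
  - destruct D; simpl. split.
    + intros s'' pi'' D2. destruct (step_fun R HR _ _ _ _ (@BStep R t s b p sigma' pis pi rl theta s0 i e e0 g i0 e1 b0 e2) _ _ D2) as [-> ->]; auto.
    + intros i2 H. apply det_star_all; auto.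
Qed.

End Aux.

Theorem mainTheorem11 :
  forall (R : list rule), DCTRS R ->
  forall (t : term) (pi' : trace) (s : term) (pi : trace)
         (D : bstar R t pi' s pi),
    safe_pair R t pi' -> det_star D.
Proof.
  intros R [HR _] t pi' s pi D _. apply det_star_all; auto.
Qed.
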